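(* Let $b_1,b_2\in\mathbb V$ with $\mathrm{ord}_p(b_i,b_i)\ge0$, and let $\Lambda_1,\Lambda_2$ be their central lattices. Then \[\langle Z(b_1)^h,Z(b_2)^v\rangle=\begin{cases}m(b_2,\Lambda_1),&\Lambda_1\in\mathcal B(b_2),\\0,&\text{otherwise},\end{cases}\] and for every vertex lattice $\Lambda$, \[\langle\mathbb P_\Lambda,Z(b_2)\rangle=\begin{cases}1,&\Lambda\in\mathcal B(b_2)\text{ and }d(\Lambda,\Lambda_2)\equiv\mathrm{ord}_p(b_2,b_2)\pmod 2,\\-p,&\Lambda\in\mathcal B(b_2)\text{ and }d(\Lambda,\Lambda_2)\not\equiv\mathrm{ord}_p(b_2,b_2)\pmod 2,\\0,&\Lambda\notin\mathcal B(b_2).\end{cases}\]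
   Context: Fix an odd prime $p$ inert in the imaginary quadratic field $k$; $k_p$, $o_{k,p}$ its completion and ring of integers, $a\mapsto a'$ conjugation, $\mathbb F=\overline{\mathbb F}_p$, $W=W(\mathbb F)$. $\mathcal D$ is the regular formal scheme over $\mathrm{Spf}\,W$ (a formal model of the Drinfeld upper half plane) representing, on $W$-schemes $S$ with $p$ locally nilpotent, isomorphism classes of $(X,i_X,\lambda_X,\rho_X)$: $X$ a $p$-divisible group of height 4 and dimension 2, $i_X:o_{k,p}\to\mathrm{End}(X)$ with $\det(T-i_X(a)|_{\mathrm{Lie}X})=(T-a)(T-a')$, $\lambda_X$ a polarization with $p\ker\lambda_X=0$, $|\ker\lambda_X|=p^2$, Rosati involution inducing conjugation on $o_{k,p}$, and $\rho_X:X\times_S\bar S\to\mathbb X\times_{\mathbb F}\bar S$ ($\bar S=S\times_W\mathbb F$) an $o_{k,p}$-linear height 0 quasi-isogeny with $\rho_X^*\lambda_{\mathbb X}=\lambda_X$, for a fixed such triple $(\mathbb X,i_{\mathbb X},\lambda_{\mathbb X})$ over $\mathbb F$. Fix a supersingular $p$-divisible group $\mathbb Y$ of height 2, dimension 1 over $\mathbb F$ with $o_{k,p}$-action and principal polarization $\lambda_{\mathbb Y}$ whose Rosati induces conjugation; its deformation space $\mathcal D_0$ is $\mathrm{Spf}\,W$ (universal lift $Y$), and $\mathcal D_0\times_W\mathcal D$ is identified with $\mathcal D$. $\mathbb V=\mathrm{Hom}_{o_{k,p}}(\mathbb Y,\mathbb X)\otimes\mathbb Q_p$ with hermitian form $(b_1,b_2)=\lambda_{\mathbb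 Y}^{-1}b_2^\vee\lambda_{\mathbb X}b_1\in k_p$; it is a split 2-dimensional hermitian space. For $b\in\mathbb V$, $Z(b)\subset\mathcal D$ is the closed formal subscheme where $\rho_X^{-1}\circ b\circ\rho_Y$ lifts to a homomorphism $Y\to X$. For closed formal subschemes with sum of ideals open, $\langle Z,Z'\rangle=\chi(\mathcal O_Z\otimes^{\mathbb L}\mathcal O_{Z'})$, extended bilinearly to cycles. A vertex lattice is an $o_{k,p}$-lattice $\Lambda\subset\mathbb V$ with $\Lambda^\sharp=\Lambda$ (type 0) or $\Lambda^\sharp=p\Lambda$ (type 2). The Bruhat–Tits tree $\mathscr B$ has vertex lattices as vertices, with an edge between $\Lambda$ of type 0 and $\Lambda'$ of type 2 iff $p\Lambda'\subset\Lambda\subset\Lambda'$; it is a $(p+1)$-regular tree with graph distance $d(\cdot,\cdot)$. $\mathcal D_{red}$ is the union of projective lines $\mathbb P_\Lambda\cong\mathbb P^1_{\mathbb F}$ indexed by vertex lattices. For $b$ with $m=\mathrm{ord}_p(b,b)\ge0$ let $t=\lfloor\frac{m+1}2\rfloor$, $\beta=p^{-t}b$; the central lattice of $b$ is the unique vertex lattice $\Lambda_0$ with $\beta\in\Lambda_0\setminus p\Lambda_0$ (type 0 iff $m$ even). Known structure: $Z(b)=Z(b)^h+Z(b)^v$, $Z(b)^v=\sum_{\Lambda\in\mathcal B(b)}m(b,\Lambda)\mathbb P_\Lambda$, where $Z(b)^h\cong\mathrm{Spf}W$ is horizontal meeting the special fibre in one non-superspecial point of $\mathbb P_{\Lambda_0}$,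 $\mathcal B(b)=\{\Lambda:b\in\Lambda\}=\{\Lambda:d(\Lambda,\Lambda_0)\le m\}$, and $m(b,\Lambda)=t-\lfloor d(\Lambda,\Lambda_0)/2\rfloor$ if $m=2t$, $m(b,\Lambda)=t-\lfloor(d(\Lambda,\Lambda_0)+1)/2\rfloor$ if $m=2t-1$. If $\mathrm{ord}_p(b,b)<0$, $Z(b)=0$ and $\mathcal B(b)=\emptyset$. Known intersection numbers: $\langle Z(b)^h,\mathbb P_\Lambda\rangle=1$ if $\Lambda=\Lambda_0$ and $0$ otherwise; $\langle\mathbb P_\Lambda,\mathbb P_{\Lambda'}\rangle=-(p+1)$ if $\Lambda=\Lambda'$, $1$ if $d(\Lambda,\Lambda')=1$, $0$ otherwise. *)

(* Defs.v *)
From HB Require Import structures.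
From mathcomp Require Import all_boot all_order all_algebra.
Set Implicit Arguments. Unset Strict Implicit. Unset Printing Implicit Defensive.
Import Order.TTheory GRing.Theory Num.Theory.
Local Open Scope ring_scope.

(* The Bruhat--Tits tree, abstractly.                                        *)
(* [adj] is the edge relation on the type [V] of vertex lattices, [d] the    *)
(* graph distance, [ty] the type of a vertex lattice (false = type 0,        *)
(* true = type 2).  [bt_tree p adj d ty] says: [d] is the graph distance of  *)
(* the (connected) graph [adj], the graph is a tree, it is (p+1)-regular,    *)
(* and edges join vertices of different types.                              *)
Definition bt_tree (p : nat) (V : eqType) (adj : rel V) (d : V -> V -> nat)
    (ty : V -> bool) : Prop :=
      (forall v w, adj v w = adj w v) /\
      (forall v, ~~ adj v v) /\
      (* d is the graph distance of adj (the graph is connected) *)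
      (forall u, d u u = 0%N) /\
      (forall u w, u != w -> exists v, adj v w /\ (d u v).+1 = d u w) /\
      (forall u v w, adj v w -> (d u w <= (d u v).+1)%N) /\
      (* acyclicity: bipartite, and every vertex w <> u has a unique
         neighbour closer to u (so every edge is a geodesic tree edge) *)
      (forall u v w, adj v w -> d u v != d u w) /\
      (forall u w v v', adj v w -> adj v' w -> (d u v < d u w)%N ->
          (d u v' < d u w)%N -> v = v') /\
      (forall v, exists s : seq V, [/\ uniq s, size s = p.+1 &
                                       forall w, adj v w = (w \in s)]) /\
      (forall v w, adj v w -> ty v != ty w).

(* Multiplicity m(b, Lambda) of P_Lambda in Z(b)^v, as a function of
   m = ord_p (b,b) >= 0 and dist = d(Lambda, Lambda_0):
   t = floor((m+1)/2);  m = 2t   : t - floor(dist/2)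
                        m = 2t-1 : t - floor((dist+1)/2).                    *)
Definition mult (m dist : nat) : int :=
  if ~~ odd m then (m./2)%:Z - (dist./2)%:Z
  else (m.+1./2)%:Z - (dist.+1./2)%:Z.

Definition ipPP (p : nat) (V : eqType) (d : V -> V -> nat) (L L' : V) : int :=
  if L == L' then - (p.+1)%:Z else if d L L' == 1%N then 1 else 0.

(* Main.v *)
From HB Require Import structures.
From mathcomp Require Import all_boot all_order all_algebra.
From mathcomp Require Import zify ring.
Require Import Defs.
Import Order.TTheory GRing.Theory Num.Theory.
Local Open Scope ring_scope.
Definition fm (m j : nat) : int := if (j <= m)%N then mult m j else 0.
Lemma arith0 m p : 1 - (p.+1)%:Z * fm m 0 + (p.+1)%:Z * fm m 1 = if odd 0 == odd m then 1 else - p%:Z.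
Proof.
rewrite /fm /mult; repeat case: ifP; nia.
Qed.
Lemma fmD1 m k : fm m k - fm m k.+1 = if (k <= m)%N then (if odd k == odd m then 0 else 1) else 0.
Proof.
rewrite /fm /mult; case hk: (odd k); case hm: (odd m); rewrite /= ?uphalfE; repeat case: ifP; lia.
Qed.
Lemma fmD2 m k : (0 < k)%N -> fm m k.-1 - fm m k = if (k <= m)%N then (if odd k == odd m then 1 else 0) else 0.
Proof.
move=> k0; rewrite /fm /mult; case hk: (odd k); case hm: (odd m); rewrite /= ?uphalfE; repeat case: ifP; lia.
Qed.
Lemma arithk m p k : (0 < k)%N ->
  - (p.+1)%:Z * fm m k + fm m k.-1 + p%:Z * fm m k.+1 =
  if (k <= m)%N then (if odd k == odd m then 1 else - p%:Z) else 0.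
Proof.
move=> k0.
have -> : - (p.+1)%:Z * fm m k + fm m k.-1 + p%:Z * fm m k.+1 =
  (fm m k.-1 - fm m k) - p%:Z * (fm m k - fm m k.+1).
  rewrite -addn1 PoszD; ring.
rewrite fmD1 fmD2 //; repeat (case: ifP => _); ring.
Qed.

Lemma sum_if_eq (T : eqType) (r : seq T) (j : T) (F : T -> int) :
  uniq r -> \sum_(i <- r) (if i == j then F i else 0) = if j \in r then F j else 0.
Proof.
elim: r => [|x r IH] /=; first by rewrite big_nil.
case/andP=> xr ur; rewrite big_cons IH // in_cons.
case: (eqVneq x j) => [e|ne]; first by rewrite -e (negbTE xr) addr0.
by rewrite add0r.
Qed.

Lemma sum_const_if (T : eqType) (s : seq T) (P : pred T) (F : T -> int) c :
  (forall x, x \in s -> P x -> F x = c) -> \sum_(x <- s | P x) F x = c *+ count P s.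
Proof.
elim: s => [|x s IH] H /=; first by rewrite big_nil.
rewrite big_cons IH; last by move=> y ys; apply: H; rewrite in_cons ys orbT.
case: ifP => Px; last by rewrite add0n.
by rewrite H ?mem_head // mulrS.
Qed.

Fixpoint walk (V : eqType) (adj : rel V) (n : nat) (u w : V) : Prop :=
  match n with 0 => u = w | n'.+1 => exists v, walk V adj n' u v /\ adj v w end.
Arguments walk {V}.

Section Tree.
Variables (p : nat) (V : eqType) (adj : rel V) (d : V -> V -> nat) (ty : V -> bool).
Hypothesis hT : bt_tree p adj d ty.

Lemma d_zero u w : d u w = 0%N -> u = w.
Proof.
case: hT => _ [_ [d0 [dex _]]] h.
case: (eqVneq u w) => // /dex [v [_ e]]; by rewrite h in e.
Qed.

Lemma walk_of_d n u w : d u w = n -> walk adj n u w.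
Proof.
elim: n w => [|n IH] w h /=; first exact: d_zero.
case: hT => _ [_ [d0 [dex _]]].
case: (eqVneq u w) => [e|/dex [v [a e]]]; first by rewrite e d0 in h.
exists v; split => //; apply: IH; move: e; rewrite h; by case.
Qed.

Lemma d_of_walk n u w : walk adj n u w -> (d u w <= n)%N.
Proof.
case: hT => _ [_ [d0 [_ [dle _]]]].
elim: n w => [|n IH] w /=; first by move=> ->; rewrite d0.
case=> v [wv a]; apply: leq_trans (dle _ _ _ a) _; exact: IH.
Qed.

Lemma walk_cons n x u w : adj x u -> walk adj n u w -> walk adj n.+1 x w.
Proof.
elim: n w => [|n IH] w a /=; first by move=> <-; exists x.
case=> v [wv a']; exists v; split => //; exact: IH.
Qed.

Lemma walk_rev n u w : walk adj n u w -> walk adj n w u.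
Proof.
case: hT => asym _.
elim: n w => [|n IH] w /=; first by move=> ->.
case=> v [wv a]; apply: (@walk_cons _ _ v); first by rewrite asym.
exact: IH.
Qed.

Lemma dsym u w : d u w = d w u.
Proof.
apply/eqP; rewrite eqn_leq; apply/andP; split; apply: d_of_walk; apply: walk_rev;
  exact: walk_of_d.
Qed.

Lemma d1_adj u w : (d u w == 1%N) = adj u w.
Proof.
case: hT => asym [airr [d0 [dex [dle _]]]].
apply/idP/idP.
- move/eqP=> h. have : u != w by apply/eqP => e; rewrite e d0 in h.
  move/dex => [v [a e]]; rewrite h in e; case: e => /d_zero e.
  by rewrite e.
- move=> a; have := dle u u w a; rewrite d0 => h.
  have : d u w != 0%N.
    apply/eqP => /d_zero e; by move: (airr u); rewrite {2}e a.
  by move: h; case: (d u w) => [|[|]].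
Qed.
End Tree.

Lemma ip_mulz (C : zmodType) (ip : C -> C -> int)
  (hipD : forall x y z, ip x (y + z) = ip x y + ip x z) x y n :
  ip x (y *~ n) = ip x y * n.
Proof.
have ip0 : ip x 0 = 0.
  have h := hipD x 0 0; rewrite addr0 in h.
  by apply: (addrI (ip x 0)); rewrite -h addr0.
have ipN : forall z, ip x (- z) = - ip x z.
  by move=> z; apply/eqP; rewrite -subr_eq0 opprK -hipD addNr ip0.
have ipn : forall k : nat, ip x (y *+ k) = ip x y * k%:R.
  elim=> [|k IH]; first by rewrite mulr0n ip0 mulr0.
  by rewrite mulrS hipD IH -addn1 natrD mulrDr mulr1 addrC.
case: n => n; first by rewrite -pmulrn ipn natz.
by rewrite NegzE mulrNz -pmulrn ipN ipn mulrN natz.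
Qed.

Lemma ip_sum (C : zmodType) (ip : C -> C -> int)
  (hipD : forall x y z, ip x (y + z) = ip x y + ip x z) (T : Type) x (s : seq T) (F : T -> C) :
  ip x (\sum_(i <- s) F i) = \sum_(i <- s) ip x (F i).
Proof.
have ip0 : ip x 0 = 0.
  have h := hipD x 0 0; rewrite addr0 in h.
  by apply: (addrI (ip x 0)); rewrite -h addr0.
elim: s => [|a s IH]; first by rewrite !big_nil.
by rewrite !big_cons hipD IH.
Qed.

Arguments ip_sum {C ip} hipD {T}.
Arguments ip_mulz {C ip} hipD.
Arguments sum_if_eq {T r}.
Arguments d1_adj {p V adj d ty}.
Arguments dsym {p V adj d ty}.

Theorem mainTheorem2
  (* p an odd prime *)
  (p : nat) (hp : prime p) (hpodd : odd p)
  (* the Bruhat--Tits tree of vertex lattices *)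
  (V : eqType) (adj : rel V) (d : V -> V -> nat) (ty : V -> bool)
  (hT : bt_tree p adj d ty)
  (* cycles on D (with compact intersection), a Z-module, and the
     bilinear (symmetric) intersection pairing <.,.> = chi(O ⊗^L O) *)
  (C : zmodType) (ip : C -> C -> int)
  (hipD : forall x y z, ip x (y + z) = ip x y + ip x z)
  (hDip : forall x y z, ip (y + z) x = ip y x + ip z x)
  (hsym : forall x y, ip x y = ip y x)
  (* the projective lines P_Lambda of D_red *)
  (P : V -> C)
  (hPP : forall L L', ip (P L) (P L') = ipPP p d L L')
  (* b_1: m1 = ord_p(b1,b1) >= 0, central lattice L1, horizontal part Zh1 *)
  (m1 : nat) (L1 : V) (hty1 : ty L1 = odd m1) (Zh1 : C)
  (hZh1 : forall L, ip Zh1 (P L) = (L == L1)%:R)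
  (* b_2: m2 = ord_p(b2,b2) >= 0, central lattice L2, horizontal part Zh2,
     B(b2) = {L : d(L, L2) <= m2} enumerated by B2 *)
  (m2 : nat) (L2 : V) (hty2 : ty L2 = odd m2) (Zh2 : C)
  (hZh2 : forall L, ip Zh2 (P L) = (L == L2)%:R)
  (B2 : seq V) (hB2u : uniq B2) (hB2 : forall L, (L \in B2) = (d L L2 <= m2)%N) :
  let Zv2 := \sum_(L <- B2) (P L) *~ mult m2 (d L L2) in
  let Z2 := Zh2 + Zv2 in
  ip Zh1 Zv2 = (if L1 \in B2 then mult m2 (d L1 L2) else 0)
  /\ (forall L, ip (P L) Z2 =
        if L \in B2 then
          (if odd (d L L2) == odd m2 then 1 else - (p%:Z))
        else 0).
Proof.
move=> Zv2 Z2.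
have hTc := hT.
case: hTc => asym [airr [d0 [dex [dle [dne [duniq [dreg dty]]]]]]].
split.
  rewrite /Zv2 (ip_sum hipD).
  under eq_bigr => L _ do rewrite (ip_mulz hipD) hZh1.
  rewrite -(sum_if_eq L1 (fun L => mult m2 (d L L2))) //.
  by apply: eq_bigr => L _; rewrite eq_sym; case: eqP => _; rewrite ?mul1r ?mul0r.
move=> L.
have [s [us ss hs]] := dreg L.
rewrite /Z2 hipD hsym hZh2 /Zv2 (ip_sum hipD).
under eq_bigr => L' _ do rewrite (ip_mulz hipD) hPP.
have Ls : L \notin s by rewrite -hs airr.
have split1 : forall L', L' \in B2 -> ipPP p d L L' * mult m2 (d L' L2) =
   (if L' == L then - (p.+1)%:Z * fm m2 (d L L2) else 0) +
   (if L' \in s then fm m2 (d L' L2) else 0).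
  move=> L' LB; rewrite /ipPP /fm.
  case: (eqVneq L L') => [e|ne].
    move: LB; rewrite -e hB2 => ->.
    by rewrite ?eqxx (negbTE Ls) addr0.
  rewrite add0r (d1_adj hT) hs -hB2 LB.
  by case: ifP => _; rewrite ?mul1r ?mul0r.
rewrite (eq_big_seq _ split1) big_split /= sum_if_eq //.
have -> : \sum_(i <- B2) (if i \in s then fm m2 (d i L2) else 0)
    = \sum_(i <- s) fm m2 (d i L2).
  rewrite -big_mkcond -big_filter (perm_big [seq x <- s | x \in B2]); last first.
    apply: uniq_perm; rewrite ?filter_uniq // => x.
    by rewrite !mem_filter andbC.
  rewrite big_filter big_mkcond /=; apply: eq_bigr => i _.
  by rewrite /fm hB2; case: (d i L2 <= m2)%N.
have dS : forall L', d L' L2 = d L2 L'.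
  by move=> L'; exact: (dsym hT).
under eq_bigr => i _ do rewrite dS.
rewrite dS hB2 dS.
case: (eqVneq L L2) => [e|ne].
  rewrite -e d0 (@sum_const_if _ s _ _ (fm m2 1)) => [|x xs _]; last first.
    by congr fm; apply/eqP; rewrite (d1_adj hT) hs.
  rewrite count_predT ss.
  rewrite leq0n -arith0 /= -[fm m2 1 *+ _]mulr_natl natz mulrC. ring.
rewrite /= add0r.
have ne' : L2 != L by rewrite eq_sym.
have [v [av ev]] := dex L2 L ne'.
have vs : v \in s by rewrite -hs asym.
rewrite (bigD1_seq v) //=.
rewrite (@sum_const_if _ s _ _ (fm m2 (d L2 L).+1)); last first.
  move=> x xs xv.
  have aLx : adj L x by rewrite hs.
  have h1 := dle L2 L x aLx.
  have h2 := dle L2 x L (etrans (asym _ _) aLx).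
  have h3 := dne L2 L x aLx.
  have h4 : ~ (d L2 x < d L2 L)%N.
    move=> lt.
    have e : v = x by apply: (duniq L2 L v x av (etrans (asym _ _) aLx)) => //; rewrite -ev.
    by move: xv; rewrite e eqxx.
  congr fm; move: h3; rewrite neq_ltn => /orP [] h3; last by exfalso.
  by apply/eqP; rewrite eqn_leq h1 h3.
have -> : count (fun i => i != v) s = p.
  have := count_predC (pred1 v) s; rewrite ss.
  have -> : count (pred1 v) s = 1%N by rewrite (count_uniq_mem v us) vs.
  by rewrite add1n => -[].
have eif : (if (d L2 L <= m2)%N then - (p.+1)%:Z * fm m2 (d L2 L) else 0)
    = - (p.+1)%:Z * fm m2 (d L2 L) by rewrite /fm; case: (d L2 L <= m2)%N; rewrite ?mulr0.
rewrite eif -(arithk m2 p (d L2 L)); last by rewrite -ev.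
rewrite -ev /= -[fm m2 _ *+ p]mulr_natl natz; ring.
Qed.
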